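(* There is a universal constant $c>0$ such that the following holds. Let $n\ge1$, $N=2^n$, $\beta\in(0,1/2]$, $\epsilon\in[0,\frac{\beta}{n+1})$ and $\delta\in[0,1]$. Every $(\epsilon,\delta,\mathsf{Zipf})$-PAC quantum learner for the concept class $\mathcal{F}_n$ of all Boolean functions $\{0,1\}^n\to\{0,1\}$ uses a number $m$ of quantum examples satisfying \[ m\;\ge\; c\cdot\frac{(1-\delta)(1-H(\beta))N-H(\delta)}{n}. \]
   Context: Identify $\{0,1\}^n$ with $[N]=\{1,\dots,N\}$. The Zipf distribution on $[N]$ is $\mathsf{Zipf}(k)=\frac{1}{kH_N}$, where $H_N=\sum_{k=1}^N \frac1k$. For a concept $c:\{0,1\}^n\to\{0,1\}$ and a distribution $D$, a quantum example is one copy of the state $\sum_{x\in\{0,1\}^n}\sqrt{D(x)}\,|x\rangle|c(x)\rangle$. An $(\epsilon,\delta,D)$-PAC quantum learner for a concept class $\mathcal{C}$ is an algorithm that, for every $c\in\mathcal{C}$, given $m$ quantum examples (for $c$ and $D$), outputs a hypothesis $h:\{0,1\}^n\to\{0,1\}$ such that, with probability at least $1-\delta$, $\Pr_{x\sim D}[c(x)\ne h(x)]\le\epsilon$. $H(p)=-p\log_2p-(1-p)\log_2(1-p)$ is the binary entropy. *)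

(* Defs.v *)
From HB Require Import structures.
From mathcomp Require Import all_boot all_order all_algebra.
From mathcomp Require Import complex.
From mathcomp Require Import Rstruct.
From Stdlib Require Rdefinitions Rpower.

Set Implicit Arguments.
Unset Strict Implicit.
Unset Printing Implicit Defensive.

Import Order.TTheory GRing.Theory Num.Theory.
Local Open Scope ring_scope.

Definition RR : rcfType := Rdefinitions.R.
Definition CC : numClosedFieldType := RR[i].
Definition toC (x : RR) : CC := real_complex RR x.

Definition log2 (x : RR) : RR := Rpower.ln x / Rpower.ln 2.
Definition xlog2x (x : RR) : RR := if x == 0 then 0 else x * log2 x.
Definition binary_entropy (p : RR) : RR := - xlog2x p - xlog2x (1 - p).

(* {0,1}^n is identified with [N] = {1,..,N}, N = 2^n; we use 'I_(2^n),
   where the element x : 'I_(2^n) stands for x.+1 \in [N]. *)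
Definition domain (n : nat) := 'I_(2 ^ n).

Definition harmonic (N : nat) : RR := \sum_(k < N) (k.+1%:R)^-1.

Definition zipf (n : nat) (x : domain n) : RR :=
  ((x.+1)%:R * harmonic (2 ^ n))^-1.

Definition boolfun (n : nat) := {ffun domain n -> bool}.

Definition err (n : nat) (D : domain n -> RR) (c h : boolfun n) : RR :=
  \sum_(x : domain n | c x != h x) D x.

(* computational basis of the Hilbert space of m quantum examples:
   (C^{N} (x) C^2)^{(x) m}, basis states |x_1,b_1>...|x_m,b_m> *)
Definition ex_basis (n m : nat) := {ffun 'I_m -> domain n * bool}.
Definition qdim (n m : nat) : nat := #|{: ex_basis n m}|%N.

(* amplitudes of one quantum example sum_x sqrt(D x) |x>|c x> *)
Definition qex_amp (n : nat) (D : domain n -> RR) (c : boolfun n)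
  (xb : domain n * bool) : CC :=
  if xb.2 == c xb.1 then toC (Num.sqrt (D xb.1)) else 0.

(* the state of m copies (tensor product), as a column vector *)
Definition qex_state (n m : nat) (D : domain n -> RR) (c : boolfun n)
  : 'cV[CC]_(qdim n m) :=
  \col_i \prod_(j < m) qex_amp D c ((enum_val i : ex_basis n m) j).

Definition adj (p q : nat) (A : 'M[CC]_(p, q)) : 'M[CC]_(q, p) :=
  (map_mx (@Num.conj CC) A)^T.

Definition psd (d : nat) (A : 'M[CC]_d) : Prop :=
  adj A = A /\ forall u : 'cV[CC]_d, 0 <= (adj u *m A *m u) 0 0.

(* A quantum learner using m quantum examples: an arbitrary quantum algorithm
   acting on the m examples and outputting a hypothesis is described by a
   POVM {M_h}_h on the m-example Hilbert space, indexed by hypotheses. *)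
Definition povm (n m : nat) (M : boolfun n -> 'M[CC]_(qdim n m)) : Prop :=
  (forall h, psd (M h)) /\ \sum_h M h = 1%:M.

Definition out_prob (n m : nat) (M : boolfun n -> 'M[CC]_(qdim n m))
  (psi : 'cV[CC]_(qdim n m)) (h : boolfun n) : CC :=
  (adj psi *m M h *m psi) 0 0.

Definition pac_learner (n m : nat) (D : domain n -> RR) (eps delta : RR)
  (M : boolfun n -> 'M[CC]_(qdim n m)) : Prop :=
  povm M /\
  forall c : boolfun n,
    toC (1 - delta) <= \sum_(h : boolfun n | err D c h <= eps)
                         out_prob M (qex_state m D c) h.

(* Main.v *)
From Stdlib Require Import Reals.
Require Import Defs.
From HB Require Import structures.
From mathcomp Require Import all_boot all_order all_algebra.
From mathcomp Require Import complex.
From mathcomp Require Import Rstruct ring lra.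
Set Implicit Arguments.
Unset Strict Implicit.
Unset Printing Implicit Defensive.
Import Order.TTheory GRing.Theory Num.Theory.
Local Open Scope ring_scope.

Lemma adjM p q r (A : 'M[CC]_(p, q)) (B : 'M[CC]_(q, r)) :
  adj (A *m B) = adj B *m adj A.
Proof. by rewrite /adj map_mxM trmx_mul. Qed.

Lemma adjK p q (A : 'M[CC]_(p, q)) : adj (adj A) = A.
Proof. by apply/matrixP=> i j; rewrite !mxE conjCK. Qed.

Lemma adjB p q (A B : 'M[CC]_(p, q)) : adj (A - B) = adj A - adj B.
Proof. by apply/matrixP=> i j; rewrite !mxE rmorphB. Qed.

Lemma adj1 p : adj (1%:M : 'M[CC]_p) = 1%:M.
Proof. by apply/matrixP=> i j; rewrite !mxE conjC_nat eq_sym. Qed.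

Lemma adj_col p q (A : 'M[CC]_(p, q)) i : adj (col i A) = row i (adj A).
Proof. by apply/matrixP=> k l; rewrite !mxE. Qed.

Lemma tr1 (A : 'M[CC]_1) : \tr A = A 0 0.
Proof. by rewrite /mxtrace big_ord1. Qed.

Lemma psd_bound d (A : 'M[CC]_d) (psi : 'cV[CC]_d) :
  psd A -> adj psi *m psi = 1%:M -> (adj psi *m A *m psi) 0 0 <= \tr A.
Proof.
move=> [hA pA] hpsi.
set P := 1%:M - psi *m adj psi.
have adjP : adj P = P by rewrite /P adjB adj1 adjM adjK.
have PP : P *m P = P.
  rewrite /P mulmxBl mul1mx mulmxBr mulmx1 -!mulmxA (mulmxA (adj psi)) hpsi mul1mx.
  by rewrite subrr subr0.
have e1 : (adj psi *m A *m psi) 0 0 = \tr (A *m (psi *m adj psi)).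
  by rewrite -tr1 -mulmxA mxtrace_mulC mulmxA.
rewrite e1 -subr_ge0.
have -> : \tr A - \tr (A *m (psi *m adj psi)) = \tr (P *m A *m P).
  rewrite [RHS]mxtrace_mulC [in RHS]mulmxA PP /P mulmxBl mul1mx.
  by rewrite linearB /= [X in _ - X]mxtrace_mulC.
rewrite /mxtrace; apply: sumr_ge0 => i _.
have := pA (col i P); rewrite adj_col adjP.
suff -> : (row i P *m A *m col i P) 0 0 = (P *m A *m P) i i by [].
rewrite -row_mul colE mulmxA -colE !mxE; by apply: eq_bigr => j _; rewrite mxE.
Qed.

Lemma harmonic_gt0 N : (0 < N)%N -> 0 < harmonic N.
Proof.
case: N => // N _; rewrite /harmonic big_ord_recl /= invr1.
by apply: ltr_pwDl => //; apply: sumr_ge0 => i _; rewrite invr_ge0.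
Qed.

Lemma zipf_ge0 n (x : domain n) : 0 <= zipf x :> RR.
Proof.
rewrite /zipf invr_ge0 mulr_ge0 //; apply/ltW/harmonic_gt0; exact: expn_gt0.
Qed.

Lemma zipf_sum n : \sum_(x : domain n) zipf x = 1.
Proof.
have hH := harmonic_gt0 (expn_gt0 2 n).
rewrite /zipf.
under eq_bigr => x _ do rewrite invfM.
by rewrite -mulr_suml divff // gt_eqF.
Qed.

Lemma toC_sum (I : finType) (F : I -> RR) : toC (\sum_i F i) = \sum_i toC (F i).
Proof. by rewrite /toC rmorph_sum. Qed.

Lemma qex_norm n m c : adj (qex_state m (@zipf n) c) *m qex_state m (@zipf n) c = 1%:M.
Proof.
apply/matrixP=> i j; rewrite (ord1 i) (ord1 j) !mxE /=.
set g := fun xb : domain n * bool => (qex_amp (@zipf n) c xb)^* * qex_amp (@zipf n) c xb.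
transitivity (\sum_(k < qdim n m) \prod_(j < m) g ((enum_val k : ex_basis n m) j)).
  apply: eq_bigr => k _; rewrite !mxE rmorph_prod -big_split /=.
  by apply: eq_bigr.
rewrite /qdim -(big_enum_val (A := {: ex_basis n m}) (fun f : ex_basis n m => \prod_(j < m) g (f j))) /=.
rewrite -(bigA_distr_bigA (fun (j : 'I_m) (xb : domain n * bool) => g xb)).
have -> : \sum_(xb : domain n * bool) g xb = 1.
  rewrite -(pair_bigA _ (fun x b => g (x, b))).
  rewrite -(rmorph1 (real_complex RR)) -(zipf_sum n).
  rewrite rmorph_sum; apply: eq_bigr => x _.
  rewrite big_bool /g /qex_amp /=.
  have key : (toC (Num.sqrt (zipf x)))^* * toC (Num.sqrt (zipf x)) = (zipf x)%:C%C.
    rewrite /toC geC0_conj ?ler0c ?sqrtr_ge0 //.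
    by rewrite -rmorphM -expr2 sqr_sqrtr // zipf_ge0.
  by case: (c x); rewrite /= ?mulr0 ?addr0 ?add0r key.
by rewrite big1.
Qed.

Lemma harmonic_nat N : harmonic N = \sum_(0 <= k < N) (k.+1%:R)^-1.
Proof. by rewrite /harmonic big_mkord. Qed.

Lemma harmonic_double (M : nat) : (0 < M)%N -> harmonic (M * 2) <= harmonic M + 1.
Proof.
move=> hM; rewrite !harmonic_nat (big_cat_nat (n := M)) //=; last by rewrite leq_pmulr.
rewrite lerD2l.
apply: (@le_trans _ _ (\sum_(M <= k < M * 2) (M%:R : RR)^-1)).
  apply: ler_sum_nat => k /andP [hk _].
  rewrite lef_pV2 ?posrE ?ltr0n //.
  by rewrite ler_nat; apply: leqW.
rewrite sumr_const_nat.
have -> : (M * 2 - M = M)%N by rewrite muln2 -addnn addnK.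
by rewrite -[_ *+ M]mulr_natr mulVf // pnatr_eq0 -lt0n.
Qed.

Lemma harmonic_gt0' n : 0 < harmonic (2 ^ n).
Proof.
case E: (2 ^ n)%N => [|N]; first by move: (expn_gt0 2 n); rewrite E.
rewrite /harmonic big_ord_recl /= invr1.
by apply: ltr_pwDl => //; apply: sumr_ge0 => i _; rewrite invr_ge0.
Qed.

Lemma harmonic_pow n : harmonic (2 ^ n) <= n.+1%:R.
Proof.
elim: n => [|n IH]; first by rewrite /harmonic big_ord1 invr1.
rewrite expnSr; apply: le_trans (harmonic_double (expn_gt0 2 n)) _.
by rewrite -natr1 lerD2r.
Qed.

Lemma zipf_lb n (x : domain n) : ((2 ^ n)%:R * n.+1%:R)^-1 <= zipf x.
Proof.
have hH := harmonic_gt0' n.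
rewrite /zipf lef_pV2 ?posrE ?mulr_gt0 ?ltr0n ?expn_gt0 //.
apply: ler_pM => //; last exact: harmonic_pow.
  exact: ltW.
by rewrite ler_nat.
Qed.

Lemma diff_small n (c h : boolfun n) (beta eps : RR) :
  0 < beta -> eps < beta / n.+1%:R -> err (@zipf n) c h <= eps ->
  #|[set x | c x != h x]|%:R <= beta * (2 ^ n)%:R.
Proof.
move=> hb he herr.
set a : RR := ((2 ^ n)%:R * n.+1%:R)^-1.
have ha : 0 < a by rewrite invr_gt0 mulr_gt0 ?ltr0n ?expn_gt0.
have h1 : a *+ #|[set x | c x != h x]| <= eps.
  apply: le_trans herr; rewrite /err.
  have -> : a *+ #|[set x | c x != h x]| = \sum_(x : domain n | c x != h x) a.
    by rewrite sumr_const cardsE.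
  by apply: ler_sum => x _; apply: zipf_lb.
have h2 : a *+ #|[set x | c x != h x]| < beta / n.+1%:R by apply: le_lt_trans he.
set k := #|[set x | c x != h x]| in h2 *.

have hN : 0 < (2 ^ n)%:R :> RR by rewrite ltr0n expn_gt0.
have hn : 0 < n.+1%:R :> RR by rewrite ltr0n.
apply/ltW.
have hn' : (1 + n%:R : RR) != 0 by rewrite addrC natr1 pnatr_eq0.
have hN' : (2 ^ n)%:R != 0 :> RR by rewrite pnatr_eq0 -lt0n expn_gt0.
have e1 : a * k%:R * ((2 ^ n)%:R * n.+1%:R) = k%:R.
  by rewrite /a; field; rewrite hn' hN'.
have e2 : beta / n.+1%:R * ((2 ^ n)%:R * n.+1%:R) = beta * (2 ^ n)%:R.
  by field.
rewrite -e1 -e2 ltr_pM2r; [by rewrite mulr_natr | exact: mulr_gt0 hN hn].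
Qed.

Definition rln (x : RR) : RR := ln x.
Definition rexp (x : RR) : RR := exp x.

Lemma lnM' (x y : RR) : 0 < x -> 0 < y -> rln (x * y) = rln x + rln y.
Proof. by move=> /RltP hx /RltP hy; rewrite /rln ln_mult. Qed.

Lemma lnX' (x : RR) k : 0 < x -> rln (x ^+ k) = k%:R * rln x.
Proof. by move=> /RltP hx; rewrite /rln -RpowE ln_pow // INRE. Qed.

Lemma ln_le' (x y : RR) : 0 < x -> x <= y -> rln x <= rln y.
Proof.
move=> hx; rewrite le_eqVlt => /orP [/eqP -> //|hxy].
by apply/ltW/RltP/ln_increasing; apply/RltP.
Qed.

Lemma exp_ln' (x : RR) : 0 < x -> rexp (rln x) = x.
Proof. by move=> /RltP hx; rewrite /rexp /rln exp_ln. Qed.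

Lemma exp_gt0' (x : RR) : 0 < rexp x.
Proof. by apply/RltP/exp_pos. Qed.

Lemma ln_exp' (x : RR) : rln (rexp x) = x.
Proof. exact: ln_exp. Qed.

Lemma exp_le' (x y : RR) : x <= y -> rexp x <= rexp y.
Proof.
rewrite le_eqVlt => /orP [/eqP -> //|hxy].
by apply/ltW/RltP/exp_increasing; apply/RltP.
Qed.

Lemma expN' (x : RR) : rexp (- x) * rexp x = 1.
Proof. rewrite /rexp -RmultE -exp_plus (_ : Rplus (-x) x = 0) ?RplusE ?addNr //; exact: exp_0. Qed.

Definition wt n (h : boolfun n) (beta : RR) (c : boolfun n) : RR :=
  \prod_(x : domain n) (if c x != h x then beta else 1 - beta).

Lemma wt_sum n (h : boolfun n) beta : \sum_c wt h beta c = 1.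
Proof.
rewrite /wt -(bigA_distr_bigA (fun x (b : bool) => if b != h x then beta else 1 - beta)) /=.
apply: big1 => x _; rewrite big_bool.
by case: (h x) => /=; ring.
Qed.

Lemma wtE n (h : boolfun n) beta c :
  wt h beta c = beta ^+ #|[set x | c x != h x]| * (1 - beta) ^+ (2 ^ n - #|[set x | c x != h x]|).
Proof.
set S := [set x | c x != h x].
rewrite /wt (bigID [in S]) /=.
congr (_ * _).
  by rewrite -prodr_const; apply: eq_bigr => x; rewrite /S inE => ->.
rewrite (eq_bigl [in ~: S]); last by move=> x; rewrite in_setC.
rewrite (eq_bigr (fun=> 1 - beta)); last first.
  by move=> x; rewrite /S !inE negbK => /eqP ->; rewrite eqxx.
by rewrite prodr_const cardsCs setCK card_ord.
Qed.

Lemma count_bound n (h : boolfun n) (beta eps : RR) :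
  0 < beta -> beta <= 1 / 2 -> eps < beta / n.+1%:R ->
  #|[set c : boolfun n | err (@zipf n) c h <= eps]|%:R
    <= rexp (- ((2 ^ n)%:R * (beta * rln beta + (1 - beta) * rln (1 - beta)))).
Proof.
move=> hb0 hb1 he.
set L := ((2 ^ n)%:R * (beta * rln beta + (1 - beta) * rln (1 - beta))).
have hb2 : 0 < 1 - beta by lra.
have key : forall c, err (@zipf n) c h <= eps -> rexp L <= wt h beta c.
  move=> c hc.
  have hk := diff_small hb0 he hc.
  set k := #|[set x | c x != h x]| in hk.
  have hkN : (k <= 2 ^ n)%N.
    by have := max_card (mem [set x | c x != h x]); rewrite card_ord.
  have hw : 0 < wt h beta c by rewrite wtE mulr_gt0 // exprn_gt0.
  rewrite -(exp_ln' hw); apply: exp_le'.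
  rewrite wtE lnM' ?exprn_gt0 // !lnX' // natrB //.
  have hab : rln beta <= rln (1 - beta) by apply: ln_le' => //; lra.
  rewrite /L; nra.
apply: (@le_trans _ _ (\sum_(c in [set c : boolfun n | err (@zipf n) c h <= eps]) rexp L / rexp L)).
  by rewrite -mulr_suml sumr_const -[rexp L *+ _]mulr_natl mulfK // gt_eqF // exp_gt0'.
rewrite -mulr_suml ler_pdivrMr ?exp_gt0' //.
rewrite expN'.
apply: le_trans (_ : \sum_c wt h beta c <= 1); last by rewrite wt_sum.
rewrite [X in _ <= X](bigID [in [set c : boolfun n | err (@zipf n) c h <= eps]]) /=.
rewrite -[X in X <= _]addr0 lerD //.
  by apply: ler_sum => c; rewrite inE => /key.
by apply: sumr_ge0 => c _; rewrite wtE mulr_ge0 // exprn_ge0 // ltW.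
Qed.

Lemma l2_gt0 : 0 < rln 2.
Proof.
have <- : ln 1 = 0 by exact: ln_1.
apply/RltP; rewrite /rln; apply: ln_increasing; apply/RltP; first exact: ltr01.
by rewrite ltr1n.
Qed.

Lemma rln1 : rln 1 = 0.
Proof. exact: ln_1. Qed.

Lemma xlog2xE x : 0 < x -> xlog2x x = x * rln x / rln 2.
Proof. by move=> hx; rewrite /xlog2x gt_eqF // /log2 mulrA. Qed.

Lemma xlog2x_le0 x : 0 <= x <= 1 -> xlog2x x <= 0.
Proof.
case/andP; rewrite le_eqVlt => /orP [/eqP <- _|hx hx1]; first by rewrite /xlog2x eqxx.
rewrite xlog2xE // -mulrA; apply: mulr_ge0_le0; first exact: ltW.
apply: mulr_le0_ge0; last by rewrite invr_ge0 ltW // l2_gt0.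
by rewrite -rln1; apply: ln_le'.
Qed.

Lemma Hbeta_eq beta : 0 < beta < 1 ->
  binary_entropy beta * rln 2 = - (beta * rln beta + (1 - beta) * rln (1 - beta)).
Proof.
case/andP=> h0 h1.
have h2 : 0 < 1 - beta by rewrite subr_gt0.
rewrite /binary_entropy !xlog2xE //.
have := l2_gt0 => hl; field; by rewrite gt_eqF.
Qed.

Lemma Hdelta_bound delta : 0 <= delta < 1 ->
  - ((1 - delta) * rln (1 - delta)) <= binary_entropy delta * rln 2.
Proof.
case/andP=> h0 h1.
have h2 : 0 < 1 - delta by rewrite subr_gt0.
have hl := l2_gt0.
have hx : xlog2x delta <= 0 by apply: xlog2x_le0; rewrite h0 ltW.
set t := (1 - delta) * rln (1 - delta).
rewrite /binary_entropy (xlog2xE h2) -/t.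
have e : (- xlog2x delta - t / rln 2) * rln 2 = - xlog2x delta * rln 2 - t.
  by field; rewrite gt_eqF.
rewrite e.
have : 0 <= - xlog2x delta * rln 2 by rewrite mulr_ge0 ?oppr_ge0 // ltW.
lra.
Qed.

Lemma lnG n : rln (2 ^ (2 ^ n))%:R = (2 ^ n)%:R * rln 2.
Proof. by rewrite natrX lnX' // ltr0n. Qed.

Lemma lnQ n m : rln ((2 ^ n * 2) ^ m)%:R = m%:R * (n.+1%:R * rln 2).
Proof. by rewrite -expnSr natrX lnX' ?ltr0n ?expn_gt0 // natrX lnX' // ltr0n. Qed.

Lemma final_real n m (beta delta : RR) :
  (1 <= n)%N -> 0 < beta -> beta <= 1 / 2 -> 0 <= delta -> delta <= 1 ->
  (2 ^ (2 ^ n))%:R * (1 - delta) <=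
    rexp (- ((2 ^ n)%:R * (beta * rln beta + (1 - beta) * rln (1 - beta)))) * ((2 ^ n * 2) ^ m)%:R ->
  1 / 2 * (((1 - delta) * (1 - binary_entropy beta) * (2 ^ n)%:R - binary_entropy delta) / n%:R) <= m%:R.
Proof.
move=> hn hb0 hb1 hd0 hd1 hyp.
have hn0 : 1 <= n%:R :> RR by rewrite ler1n.
have hm0 : 0 <= m%:R :> RR by [].
set Y := ((1 - delta) * (1 - binary_entropy beta) * (2 ^ n)%:R - binary_entropy delta).
suff hY : Y <= m%:R * n.+1%:R.
  have h2 : Y / n%:R <= 2 * m%:R.
    rewrite ler_pdivrMr; last by apply: lt_le_trans hn0.
    apply: le_trans hY _; rewrite -!natrM ler_nat.
    by rewrite mulnS -mulnA mul2n -addnn addnC leq_add2l leq_pmulr.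
  move: h2; move: (Y / n%:R) => z; clear; move=> hz; lra.
have hl := l2_gt0.
move: hd1; rewrite le_eqVlt => /orP [/eqP hd1|hd1].
  rewrite /Y hd1 subrr !mul0r sub0r /binary_entropy subrr.
  have e0 : xlog2x 0 = 0 by rewrite /xlog2x eqxx.
  have e1 : xlog2x 1 = 0 by rewrite xlog2xE ?ltr01 // rln1 mulr0 mul0r.
  by rewrite e0 e1 !(oppr0, addr0, subr0) mulr_ge0.
have hb2 : beta < 1.
  apply: le_lt_trans hb1 _; clear; lra.
have hd2 : 0 < 1 - delta by rewrite subr_gt0.
have HB := Hbeta_eq (beta := beta); rewrite hb0 hb2 in HB; have {}HB := HB isT.
have HD := Hdelta_bound (delta := delta); rewrite hd0 hd1 in HD; have {}HD := HD isT.
have hyp2 : (2 ^ n)%:R * rln 2 + rln (1 - delta) + (2 ^ n)%:R * (beta * rln beta + (1 - beta) * rln (1 - beta)) <= m%:R * (n.+1%:R * rln 2).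
  have hpos : 0 < (2 ^ (2 ^ n))%:R * (1 - delta) by rewrite mulr_gt0 // ltr0n expn_gt0.
  have h := ln_le' hpos hyp.
  rewrite lnM' ?ltr0n ?expn_gt0 // in h.
  rewrite lnM' ?ltr0n ?expn_gt0 ?exp_gt0' // in h.
  rewrite lnG lnQ ln_exp' in h.
  move: h.
  move: (_ * rln 2) => a; move: (rln (1 - delta)) => b; move: (_ * (beta * _ + _)) => c.
  move: (m%:R * _) => d; clear; move=> h; lra.
  exact: exp_gt0'.
  by rewrite muln_gt0 expn_gt0.
set N : RR := (2 ^ n)%:R in hyp2 Y *.
set L := N * (beta * rln beta + (1 - beta) * rln (1 - beta)) in hyp2.
have hN : 0 < N by rewrite ltr0n expn_gt0.
set Hb := binary_entropy beta in HB Y *.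
set Hd := binary_entropy delta in HD Y *.
set A := rln (1 - delta) in HD hyp2.
set l := rln 2 in hl HB HD hyp2 *.
have eL : Hb * l * N = - L.
  by rewrite HB /L; ring.
set k := m%:R * n.+1%:R.
have hk : 0 <= k by rewrite mulr_ge0.
suff : Y * l <= k * l by rewrite ler_pM2r.
have f1 : 0 <= (1 - delta) * (k * l - (N * l + A + L)).
  by apply: mulr_ge0; [exact: ltW | rewrite subr_ge0 /k -mulrA].
have f2 : 0 <= delta * (k * l) by rewrite mulr_ge0 // mulr_ge0 // ltW.
have eL2 : (1 - delta) * (Hb * l * N) = (1 - delta) * (- L) by rewrite eL.
have HD2 : 0 <= Hd * l + (1 - delta) * A.
  by move: HD; move: (Hd * l) (((1 - delta) * A)) => u v; clear; lra.
have -> : Y * l = (1 - delta) * (N * l) - (1 - delta) * (Hb * l * N) - Hd * l by rewrite /Y; ring.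
rewrite eL2.
move: f1 f2 HD2; move: (k * l) (N * l) (Hd * l) => p q r; clear; move=> f1 f2 f3.
lra.
Qed.

Lemma psd_tr_ge0 d (A : 'M[CC]_d) : psd A -> 0 <= \tr A.
Proof.
move=> [hA pA]; rewrite /mxtrace; apply: sumr_ge0 => i _.
have := pA (col i 1%:M); rewrite adj_col adj1.
suff -> : (row i 1%:M *m A *m col i 1%:M) 0 0 = A i i by [].
by rewrite -row_mul colE mulmxA -colE mul1mx mulmx1 !mxE.
Qed.

Lemma qdimE n m : qdim n m = ((2 ^ n * 2) ^ m)%N.
Proof. by rewrite /qdim card_ffun card_prod card_ord card_bool card_ord. Qed.

Lemma card_boolfun n : #|{: boolfun n}| = (2 ^ (2 ^ n))%N.
Proof. by rewrite card_ffun card_bool card_ord. Qed.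

Theorem mainTheorem4 :
  exists c : RR, 0 < c /\
  forall (n m : nat) (beta eps delta : RR),
    (1 <= n)%N ->
    0 < beta <= 1 / 2 ->
    0 <= eps < beta / (n.+1)%:R ->
    0 <= delta <= 1 ->
    forall M : boolfun n -> 'M[CC]_(qdim n m),
      pac_learner (@zipf n) eps delta M ->
      c * (((1 - delta) * (1 - binary_entropy beta) * (2 ^ n)%:R
             - binary_entropy delta) / n%:R) <= m%:R.
Proof.
exists (1 / 2); split; first by rewrite divr_gt0 ?ltr01 ?ltr0n.
move=> n m beta eps delta hn /andP [hb0 hb1] /andP [he0 he1] /andP [hd0 hd1] M [[hpsd hsum] hpac].
apply: final_real => //.
set K := rexp _.
have hB : forall h : boolfun n, (#|[set c : boolfun n | err (@zipf n) c h <= eps]|%:R : RR) <= K.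
  by move=> h; apply: count_bound.
have hK : 0 <= K by apply/ltW/exp_gt0'.
rewrite -lecR.
apply: (@le_trans _ _ (\sum_(c : boolfun n) \sum_(h | err (@zipf n) c h <= eps) \tr (M h))).
  apply: (@le_trans _ _ (\sum_(c : boolfun n) toC (1 - delta))).
    rewrite sumr_const card_boolfun /toC rmorphM rmorph_nat mulr_natl //.
  apply: ler_sum => c _; apply: le_trans (hpac c) _.
  apply: ler_sum => h _; apply: psd_bound => //; exact: qex_norm.
rewrite (eq_bigr (fun c => \sum_h (if err (@zipf n) c h <= eps then \tr (M h) else 0))); last first.
  by move=> c _; rewrite big_mkcond.
rewrite exchange_big /=.
apply: (@le_trans _ _ (\sum_h toC K * \tr (M h))).
  apply: ler_sum => h _; rewrite -big_mkcond /= sumr_const -cardsE -mulr_natl.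
  apply: ler_wpM2r; first exact: psd_tr_ge0.
  by rewrite /toC -(rmorph_nat (real_complex RR)) lecR; apply: hB.
rewrite -mulr_sumr -linear_sum /= hsum mxtrace1 qdimE.
by rewrite /toC rmorphM rmorph_nat.
Qed.
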